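(* In the $q$-Onsager algebra $\mathcal O$, the elements $\xi_1=XY-YX$ and $\xi_2=X^2Y^2-Y^2X^2+(q^2+q^{-2})(YXYX-XYXY)$ commute if and only if $q^6\neq 1$.
   Context: Let $\mathbb F$ be a field and fix a nonzero $q\in\mathbb F$ with $q^4\neq 1$. Let $[3]_q=q^2+1+q^{-2}$. The $q$-Onsager algebra $\mathcal O$ is the associative $\mathbb F$-algebra with 1 defined by generators $X,Y$ and relations $X^3Y-[3]_q X^2YX+[3]_q XYX^2-YX^3 = -(q^2-q^{-2})^2(XY-YX)$ and $Y^3X-[3]_q Y^2XY+[3]_q YXY^2-XY^3 = -(q^2-q^{-2})^2(YX-XY)$. *)

(* Defs.v *)
From HB Require Import structures.
From mathcomp Require Import all_boot all_order all_algebra.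
Set Implicit Arguments. Unset Strict Implicit. Unset Printing Implicit Defensive.
Import GRing.Theory.
Local Open Scope ring_scope.

(* The q-Onsager algebra O over the field F is presented by generators X, Y
   and the two q-Dolan-Grady relations.  Since MathComp has no free
   (noncommutative) algebras / quotients by two-sided ideals, an identity
   "P(X,Y) = Q(X,Y) in O" is expressed by the defining universal property of
   a presented algebra: it holds in O iff it holds for every pair of elements
   x, y of every F-algebra A satisfying the defining relations (O itself being
   one such algebra, and every such pair being the image of (X,Y) under an
   algebra map O -> A). *)

Section QOnsager.
Variables (F : fieldType) (q : F).

Definition qint3 : F := q ^+ 2 + 1 + q ^- 2.

Definition qDG_coef : F := (q ^+ 2 - q ^- 2) ^+ 2.

Definition qOnsager_rel1 (A : algType F) (x y : A) : Prop :=
  x ^+ 3 * y - qint3 *: (x ^+ 2 * y * x) + qint3 *: (x * y * x ^+ 2) - y * x ^+ 3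
  = - (qDG_coef *: (x * y - y * x)).

Definition qOnsager_rel2 (A : algType F) (x y : A) : Prop :=
  y ^+ 3 * x - qint3 *: (y ^+ 2 * x * y) + qint3 *: (y * x * y ^+ 2) - x * y ^+ 3
  = - (qDG_coef *: (y * x - x * y)).

Definition holds_in_qOnsager
  (P Q : forall A : algType F, A -> A -> A) : Prop :=
  forall (A : algType F) (x y : A),
    qOnsager_rel1 x y -> qOnsager_rel2 x y -> P A x y = Q A x y.

Definition xi1 (A : algType F) (x y : A) : A := x * y - y * x.

Definition xi2 (A : algType F) (x y : A) : A :=
  x ^+ 2 * y ^+ 2 - y ^+ 2 * x ^+ 2
  + (q ^+ 2 + q ^- 2) *: (y * x * y * x - x * y * x * y).

End QOnsager.

(* Main.v *)
Require Import Defs.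
From HB Require Import structures.
From mathcomp Require Import all_boot all_order all_algebra.
From mathcomp Require Import ring.
Import GRing.Theory.
Local Open Scope ring_scope.

Set Implicit Arguments. Unset Strict Implicit.

Section Refl.
Variables (F : fieldType) (A : algType F) (x y : A).

Fixpoint word (w : seq bool) : A :=
  match w with [::] => 1 | b :: w' => (if b then y else x) * word w' end.

Lemma word_cat w1 w2 : word (w1 ++ w2) = word w1 * word w2.
Proof. by elim: w1 => [|b w IH] /=; rewrite ?mul1r // IH mulrA. Qed.

Definition poly := seq (F * seq bool).
Definition peval (p : poly) : A := \sum_(m <- p) m.1 *: word m.2.

Fixpoint pscale (c : F) (p : poly) : poly :=
  match p with [::] => [::] | (a, w) :: p' => (c * a, w) :: pscale c p' end.
Fixpoint pmul1 (a : F) (w : seq bool) (r : poly) : poly :=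
  match r with [::] => [::] | (b, v) :: r' => (a * b, w ++ v) :: pmul1 a w r' end.
Fixpoint pmul (p r : poly) : poly :=
  match p with [::] => [::] | (a, w) :: p' => pmul1 a w r ++ pmul p' r end.

Lemma peval_cat p r : peval (p ++ r) = peval p + peval r.
Proof. by rewrite /peval big_cat. Qed.

Lemma peval_scale c p : peval (pscale c p) = c *: peval p.
Proof.
elim: p => [|[a w] p IH] /=; first by rewrite /peval !big_nil scaler0.
by rewrite /peval !big_cons -!/(peval _) IH /= scalerDr scalerA.
Qed.

Lemma peval_mul1 a w r : peval (pmul1 a w r) = (a *: word w) * peval r.
Proof.
elim: r => [|[b v] r IH] /=; first by rewrite /peval !big_nil mulr0.
rewrite /peval !big_cons -!/(peval _) IH /= mulrDr word_cat.
by congr (_ + _); apply/esym; rewrite -scalerAl -scalerAr scalerA.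
Qed.

Lemma peval_mul p r : peval (pmul p r) = peval p * peval r.
Proof.
elim: p => [|[a w] p IH] /=; first by rewrite /peval !big_nil mul0r.
by rewrite peval_cat peval_mul1 IH /peval big_cons -!/(peval _) mulrDl.
Qed.

Inductive term := TX | TY | TOne | TAdd of term & term | TMul of term & term
 | TScale of F & term | TOpp of term.

Fixpoint tden t : A :=
  match t with TX => x | TY => y | TOne => 1 | TAdd a b => tden a + tden b
  | TMul a b => tden a * tden b | TScale c a => c *: tden a | TOpp a => - tden a end.

Fixpoint tnorm t : poly :=
  match t with TX => [:: (1, [:: false])] | TY => [:: (1, [:: true])]
  | TOne => [:: (1, [::])] | TAdd a b => tnorm a ++ tnorm b
  | TMul a b => pmul (tnorm a) (tnorm b) | TScale c a => pscale c (tnorm a)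
  | TOpp a => pscale (-1) (tnorm a) end.

Lemma tnormE t : tden t = peval (tnorm t).
Proof.
elim: t => /=.
- by rewrite /peval big_cons big_nil /= scale1r mulr1 addr0.
- by rewrite /peval big_cons big_nil /= scale1r mulr1 addr0.
- by rewrite /peval big_cons big_nil /= scale1r addr0.
- by move=> a -> b ->; rewrite peval_cat.
- by move=> a -> b ->; rewrite peval_mul.
- by move=> c a ->; rewrite peval_scale.
- by move=> a ->; rewrite peval_scale scaleN1r.
Qed.

Fixpoint weq (u v : seq bool) : bool :=
  match u, v with [::], [::] => true
  | b :: u', c :: v' => (if b then c else ~~ c) && weq u' v' | _, _ => false end.

Lemma weqP u v : weq u v = (u == v).
Proof.
elim: u v => [|b u IH] [|c v] //=.
by rewrite eqseq_cons IH; case: b; case: c.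
Qed.

Fixpoint pcoef (p : poly) (w : seq bool) : F :=
  match p with [::] => 0 | (a, v) :: p' => (if weq v w then a else 0) + pcoef p' w end.

Fixpoint allz (p : poly) (ws : seq (seq bool)) : Prop :=
  match ws with [::] => True | w :: ws' => pcoef p w = 0 /\ allz p ws' end.

Lemma pcoefE p w : pcoef p w = \sum_(m <- p) (if m.2 == w then m.1 else 0).
Proof.
elim: p => [|[a v] p IH] /=; first by rewrite big_nil.
by rewrite big_cons IH weqP.
Qed.

Lemma peval_zero p ws : uniq ws -> all (fun w => w \in ws) (map snd p) ->
  allz p ws -> peval p = 0.
Proof.
move=> Uws /allP Hin Hz.
have Hm : forall m, m \in p -> m.2 \in ws.
  by move=> m mp; apply: Hin; apply/mapP; exists m.
have -> : peval p = \sum_(w <- ws) pcoef p w *: word w.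
  rewrite /peval big_seq.
  under eq_bigr => m mp.
    rewrite (_ : m.1 *: word m.2 = \sum_(w <- ws) (if m.2 == w then m.1 else 0) *: word w); last first.
      rewrite (bigD1_seq (m.2) (Hm m mp) Uws) /= eqxx big1 ?addr0 //.
      by move=> w; rewrite eq_sym => /negbTE ->; rewrite scale0r.
    over.
  rewrite -big_seq exchange_big /=; apply: eq_bigr => w _.
  by rewrite pcoefE scaler_suml.
rewrite big1_seq // => w [] /= Hw.
elim: ws Hz Hw {Uws Hin Hm} => [|v ws IH] //= [Hv Hz].
by rewrite in_cons => /orP [/eqP ->|Hw]; rewrite ?Hv ?scale0r // IH.
Qed.


Fixpoint wmem (w : seq bool) (ws : seq (seq bool)) : bool :=
  match ws with [::] => false | v :: ws' => weq v w || wmem w ws' end.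
Fixpoint wundup (ws : seq (seq bool)) : seq (seq bool) :=
  match ws with [::] => [::] | w :: ws' => if wmem w ws' then wundup ws' else w :: wundup ws' end.

Lemma wmemE w ws : wmem w ws = (w \in ws).
Proof. by elim: ws => [|v ws IH] //=; rewrite in_cons IH weqP eq_sym. Qed.

Lemma wundupE ws : wundup ws = undup ws.
Proof. by elim: ws => [|v ws IH] //=; rewrite wmemE IH. Qed.

Lemma peval_zero' p : allz p (wundup (map snd p)) -> peval p = 0.
Proof.
rewrite wundupE => Hz; apply: (peval_zero (ws := undup (map snd p))) => //.
  exact: undup_uniq.
by apply/allP => w; rewrite mem_undup.
Qed.

Lemma tnorm_zero t : allz (tnorm t) (wundup (map snd (tnorm t))) -> tden t = 0.
Proof. by rewrite tnormE; apply: peval_zero'. Qed.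

End Refl.

Section Key.
Variables (F : fieldType) (A : algType F) (x y : A).
Notation X := (TX F). Notation Y := (TY F).
Notation M := TMul. Notation Ad := TAdd.
Definition X2 := M X X. Definition X3 := M X (M X X).
Definition Y2 := M Y Y. Definition Y3 := M Y (M Y Y).
Definition T1 (a r : F) := Ad (Ad (Ad (Ad (M X3 Y) (TOpp (TScale a (M (M X2 Y) X))))
   (TScale a (M (M X Y) X2))) (TOpp (M Y X3))) (TScale r (Ad (M X Y) (TOpp (M Y X)))).
Definition T2 (a r : F) := Ad (Ad (Ad (Ad (M Y3 X) (TOpp (TScale a (M (M Y2 X) Y))))
   (TScale a (M (M Y X) Y2))) (TOpp (M X Y3))) (TScale r (Ad (M Y X) (TOpp (M X Y)))).
Definition Txi1 := Ad (M X Y) (TOpp (M Y X)).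
Definition Txi2 (s : F) := Ad (Ad (M X2 Y2) (TOpp (M Y2 X2)))
   (TScale s (Ad (M (M (M Y X) Y) X) (TOpp (M (M (M X Y) X) Y)))).
Definition TC s := Ad (M Txi1 (Txi2 s)) (TOpp (M (Txi2 s) Txi1)).
Definition TK (s r : F) :=
  let E1 := T1 (s + 1) r in let E2 := T2 (s + 1) r in
  Ad (TScale (s + 1) (TC s)) (TOpp (Ad (Ad (TScale r (Ad E1 E2))
     (Ad (Ad (M Y2 E1) (M E1 Y2)) (Ad (M X2 E2) (M E2 X2))))
     (TOpp (TScale s (Ad (M (M Y E1) Y) (M (M X E2) X)))))).

Lemma key (s r : F) : tden x y (TK s r) = 0.
Proof.
apply: tnorm_zero.
cbn [TK T1 T2 TC Txi1 Txi2 X2 X3 Y2 Y3 tnorm pmul pmul1 pscale cat map fst snd wundup wmem weq allz pcoef orb andb negb].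
repeat split; ring.
Qed.
End Key.
Section M3.
Variable F : fieldType.
Definition mx3 (a b c d e f g h k : F) : 'M[F]_3 :=
  \matrix_(i < 3, j < 3) nth 0 (nth [::] [:: [:: a; b; c]; [:: d; e; f]; [:: g; h; k]] i) j.

Ltac mx3_tac := apply/matrixP => - [[|[|[|?]]] ?] [[|[|[|?]]] ?] //;
  rewrite !mxE ?big_ord_recr ?big_ord0 /= ?mxE //=.

Lemma mx3_mul a b c d e f g h k a' b' c' d' e' f' g' h' k' :
  mx3 a b c d e f g h k * mx3 a' b' c' d' e' f' g' h' k' =
  mx3 (a*a' + b*d' + c*g') (a*b' + b*e' + c*h') (a*c' + b*f' + c*k')
      (d*a' + e*d' + f*g') (d*b' + e*e' + f*h') (d*c' + e*f' + f*k')
      (g*a' + h*d' + k*g') (g*b' + h*e' + k*h') (g*c' + h*f' + k*k').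
Proof. mx3_tac; by rewrite add0r. Qed.

Lemma mx3_add a b c d e f g h k a' b' c' d' e' f' g' h' k' :
  mx3 a b c d e f g h k + mx3 a' b' c' d' e' f' g' h' k' =
  mx3 (a+a') (b+b') (c+c') (d+d') (e+e') (f+f') (g+g') (h+h') (k+k').
Proof. by mx3_tac. Qed.

Lemma mx3_opp a b c d e f g h k :
  - mx3 a b c d e f g h k = mx3 (-a) (-b) (-c) (-d) (-e) (-f) (-g) (-h) (-k).
Proof. by mx3_tac. Qed.

Lemma mx3_scale z a b c d e f g h k :
  z *: mx3 a b c d e f g h k = mx3 (z*a) (z*b) (z*c) (z*d) (z*e) (z*f) (z*g) (z*h) (z*k).
Proof. by mx3_tac. Qed.

Lemma mx3_one : (1 : 'M[F]_3) = mx3 1 0 0 0 1 0 0 0 1.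
Proof. by mx3_tac. Qed.

Lemma mx3_entry10 a b c d e f g h k : mx3 a b c d e f g h k (inord 1) (inord 0) = d.
Proof. by rewrite mxE /= !inordK. Qed.
End M3.

Lemma aux_lin (R : pzRingType) (V : lmodType R) (a b c : V) (k l : R) :
  k *: a + l *: b - (k *: c + l *: b) = - (- k *: (a - c)).
Proof. by rewrite scaleNr opprK scalerBr opprD addrACA subrr addr0. Qed.

Theorem proposition9p4 (F : fieldType) (q : F) (hq0 : q != 0)
    (hq4 : q ^+ 4 != 1) :
  holds_in_qOnsager q
    (fun A x y => xi1 x y * xi2 q x y)
    (fun A x y => xi2 q x y * xi1 x y)
  <-> q ^+ 6 != 1.
Proof.
set s := q ^+ 2 + q ^- 2.
have hq2 : q ^+ 2 != 0 by rewrite expf_neq0.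
have ha : qint3 q = s + 1 by rewrite /qint3 /s; ring.
have hsq : (s + 1) * q ^+ 2 = q ^+ 4 + q ^+ 2 + 1.
  by rewrite /s; field.
have h6f : q ^+ 6 - 1 = (q ^+ 2 - 1) * (q ^+ 4 + q ^+ 2 + 1) by ring.
split.
- move=> H; apply/negP => /eqP h6.
  have ht : q ^+ 4 + q ^+ 2 + 1 = 0.
    move: h6f; rewrite h6 subrr => /esym/eqP; rewrite mulf_eq0 => /orP [|/eqP //].
    rewrite subr_eq0 => /eqP h2; case/negP: hq4.
    by rewrite (_ : 4 = 2 * 2)%N // exprM h2 expr1n.
  have hs : s = -1.
    have : (s + 1) * q ^+ 2 = 0 by rewrite hsq ht.
    move/eqP; rewrite mulf_eq0 (negbTE hq2) orbF => /eqP h.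
    by rewrite -[s](addrK 1) h sub0r.
  have hr : qDG_coef q = - 3%:R.
    rewrite /qDG_coef (_ : (q ^+ 2 - q ^- 2) ^+ 2 = s ^+ 2 - 4%:R); last by rewrite /s; field.
    by rewrite hs; ring.
  have h3 : (3%:R : F) != 0.
    apply/negP => /eqP h3.
    have : (q ^+ 2 - 1) ^+ 2 = 0.
      rewrite (_ : _ ^+ 2 = q ^+ 4 + q ^+ 2 + 1 - 3%:R * q ^+ 2); last by ring.
      by rewrite ht h3 mul0r subr0.
    move/eqP; rewrite expf_eq0 /= subr_eq0 => /eqP h2; case/negP: hq4.
    by rewrite (_ : 4 = 2 * 2)%N // exprM h2 expr1n.
  pose X0 := mx3 (2%:R : F) 0 0 0 (-1) 1 0 0 (-1).
  pose Y0 := mx3 (2%:R : F) 0 0 0 2%:R 0 1 0 (-1).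
  have hX3 : X0 ^+ 3 = 3%:R *: X0 + 2%:R *: 1.
    rewrite /X0 mx3_one !mx3_scale mx3_add !exprS expr0 mulr1 !mx3_mul.
    by congr (mx3 _ _ _ _ _ _ _ _ _); ring.
  have hY3 : Y0 ^+ 3 = 3%:R *: Y0 + 2%:R *: 1.
    rewrite /Y0 mx3_one !mx3_scale mx3_add !exprS expr0 mulr1 !mx3_mul.
    by congr (mx3 _ _ _ _ _ _ _ _ _); ring.
  have r1 : qOnsager_rel1 q X0 Y0.
    rewrite /qOnsager_rel1 ha hs hr addNr !scale0r subr0 addr0 hX3.
    rewrite mulrDl mulrDr -!scalerAl -!scalerAr mul1r mulr1.
    exact: aux_lin.
  have r2 : qOnsager_rel2 q X0 Y0.
    rewrite /qOnsager_rel2 ha hs hr addNr !scale0r subr0 addr0 hY3.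
    rewrite mulrDl mulrDr -!scalerAl -!scalerAr mul1r mulr1.
    exact: aux_lin.
  have HC := H _ X0 Y0 r1 r2.
  rewrite /= /xi1 /xi2 -/s hs !expr2 /X0 /Y0 in HC.
  rewrite !(mx3_mul, mx3_opp, mx3_add, mx3_scale) in HC.
  have := congr1 (fun M : 'M[F]_3 => M (inord 1) (inord 0)) HC.
  rewrite !mx3_entry10 => /eqP; rewrite -subr_eq0 => /eqP E.
  have : (3%:R : F) ^+ 4 = 0 by apply: (eq_trans _ E); ring.
  by move/eqP; rewrite expf_eq0 (negbTE h3) andbF.
- move=> h6 A x y h1 h2.
  have hs1 : s + 1 != 0.
    apply/negP => /eqP h; move: h6; rewrite -subr_eq0 h6f -hsq h mul0r mulr0.
    by rewrite eqxx.
  set r := qDG_coef q.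
  rewrite /qOnsager_rel1 ha in h1; rewrite /qOnsager_rel2 ha in h2.
  have e1 : tden x y (T1 (s + 1) r) = 0.
    rewrite -[tden _ _ _]/(x ^+ 3 * y - (s+1) *: (x ^+ 2 * y * x) + (s+1) *: (x * y * x ^+ 2)
       - y * x ^+ 3 + r *: (x * y - y * x)).
    by rewrite h1 addNr.
  have e2 : tden x y (T2 (s + 1) r) = 0.
    rewrite -[tden _ _ _]/(y ^+ 3 * x - (s+1) *: (y ^+ 2 * x * y) + (s+1) *: (y * x * y ^+ 2)
       - x * y ^+ 3 + r *: (y * x - x * y)).
    by rewrite h2 addNr.
  have HK := key x y s r.
  pose E1 := tden x y (T1 (s + 1) r). pose E2 := tden x y (T2 (s + 1) r).
  change ((s + 1) *: tden x y (TC s) + - ((r *: (E1 + E2) +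
     ((y * y * E1 + E1 * (y * y)) + (x * x * E2 + E2 * (x * x)))) +
     - (s *: (y * E1 * y + x * E2 * x))) = 0) in HK.
  rewrite /E1 /E2 e1 e2 !(mulr0, mul0r, addr0, scaler0, oppr0) in HK.
  change ((s + 1) *: (xi1 x y * xi2 q x y - xi2 q x y * xi1 x y) = 0) in HK.
  move/eqP: HK; rewrite scaler_eq0 (negbTE hs1) /= subr_eq0 => /eqP //.
Qed.
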